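(* Let $V$ be an $\mathcal{H}$-module vertex algebra and let $W=\bigoplus_{n\in\mathbb{Z}}W_n$ be a $(V,\mathcal{H})$-module. Then every $f\in\mathrm{Hom}_{(V,\mathcal{H})}(V,W)$ satisfies $f(V_n)\subset W_n$ for all $n\in\mathbb{Z}$.
   Context: Throughout, $\mathbb{F}$ is an algebraically closed field of odd prime characteristic $p$; vertex algebras and modules are over $\mathbb{F}$. Every vertex algebra $V$ is a module for the bialgebra $\mathcal{B}$ with basis $\{\mathcal{D}^{(n)}\}_{n\in\mathbb{N}}$, $\mathcal{D}^{(m)}\mathcal{D}^{(n)}=\binom{m+n}{n}\mathcal{D}^{(m+n)}$, via $\mathcal{D}^{(n)}v=v_{-n-1}\mathbf{1}$. $\mathcal{H}$: let $\mathfrak{sl}_2$ over $\mathbb{C}$ have basis $L_{-1},L_0,L_1$ with $[L_1,L_{-1}]=2L_0$, $[L_0,L_{\pm1}]=\mp L_{\pm1}$; put $L_{\pm1}^{(n)}=L_{\pm1}^n/n!$, $L_0^{(n)}=\binom{-2L_0}{n}$ in $U(\mathfrak{sl}_2)$; $U(\mathfrak{sl}_2)_{\mathbb{Z}}$ is the $\mathbb{Z}$-span of the $L_{-1}^{(i)}L_0^{(j)}L_1^{(k)}$, and $\mathcal{H}=\mathbb{F}\otimes_{\mathbb{Z}}U(\mathfrak{sl}_2)_{\mathbb{Z}}$. $e^{zL_{\pm1}}=\sum_{n\ge0}z^nL_{\pm1}^{(n)}$. For $v$ homogeneous of degree $n$, $f(z)^{\deg}v:=f(z)^nv$, extended linearly.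 A $\mathbb{Z}$-graded vertex algebra: $V=\bigoplus V_n$, $\mathbf{1}\in V_0$, $u_rV_n\subset V_{m+n-r-1}$ for $u\in V_m$. A $\mathbb{Z}$-graded weight $\mathcal{H}$-module: $W=\bigoplus W_n$ with $\mathcal{H}$-action, $L_{\pm1}^{(r)}W_n\subset W_{n\mp r}$, $L_0^{(r)}|_{W_n}=\binom{-2n}{r}$. An $\mathcal{H}$-module vertex algebra: a $\mathbb{Z}$-graded vertex algebra $V$ which is a $\mathbb{Z}$-graded weight $\mathcal{H}$-module with $L_{-1}^{(n)}=\mathcal{D}^{(n)}$, such that $V_n=0$ for $n\ll0$, $L_1^{(n)}\mathbf{1}=\delta_{n,0}\mathbf{1}$, and $e^{zL_1}Y(v,z_0)e^{-zL_1}=Y\bigl(e^{z(1-zz_0)L_1}(1-zz_0)^{-2\deg}v,z_0/(1-zz_0)\bigr)$ for $v\in V$. A $(V,\mathcal{H})$-module: a $\mathbb{Z}$-graded weight $\mathcal{H}$-module $W$ which is a $\mathbb{Z}$-graded $V$-module ($v_mW_n\subset W_{k+n-m-1}$ for $v\in V_k$) satisfying $e^{zL_{-1}}Y_W(v,x)e^{-zL_{-1}}=Y_W(e^{zL_{-1}}v,x)$ and $e^{zL_1}Y_W(v,z_0)e^{-zL_1}=Y_W\bigl(e^{z(1-zz_0)L_1}(1-zz_0)^{-2\deg}v,z_0/(1-zz_0)\bigr)$. $\mathrm{Hom}_{(V,\mathcal{H})}(V,W)$ is the space of linear maps that are both $V$-module and $\mathcal{H}$-module homomorphisms. *)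

(* Defs.v *)
From HB Require Import structures.
From mathcomp Require Import all_boot all_order all_algebra.
Set Implicit Arguments. Unset Strict Implicit. Unset Printing Implicit Defensive.
Import Order.TTheory GRing.Theory Num.Theory.
Local Open Scope ring_scope.

Definition binz (N : int) (i : nat) : int :=
  match N with
  | Posz n => ('C(n, i))%:Z
  | Negz n => (-1) ^+ i * ('C(n + i, i))%:Z
  end.

Definition msign (R : pzRingType) (l : int) : R := (-1) ^+ (absz l).

Section Defs.
Variable F : fieldType.

Definition is_grading (V : lmodType F) (G : int -> V -> Prop) : Prop :=
  [/\ (forall n, G n 0),
      (forall n (a : F) x y, G n x -> G n y -> G n (a *: x + y)),
      (forall v : V, exists s : seq (int * V),
          (forall x, x \in s -> G x.1 x.2) /\ v = \sum_(x <- s) x.2) &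
      (forall s : seq (int * V), uniq (map fst s) ->
          (forall x, x \in s -> G x.1 x.2) -> \sum_(x <- s) x.2 = 0 ->
          forall x, x \in s -> x.2 = 0)].

Definition is_lin (U W : lmodType F) (f : U -> W) : Prop :=
  forall (a : F) x y, f (a *: x + y) = a *: f x + f y.

(* Y n u w = u_n w ; Borcherds (Jacobi) identity, coefficientwise:
   sum_i C(m,i) (u_{l+i} v)_{m+n-i} w
     = sum_i (-1)^i C(l,i) (u_{l+m-i} v_{n+i} w - (-1)^l v_{l+n-i} u_{m+i} w).
   The sums are finite by truncation; we require equality of all
   sufficiently long partial sums. *)
Definition borcherds (V W : lmodType F) (Y : int -> V -> V -> V)
    (YW : int -> V -> W -> W) : Prop :=
  forall (u v : V) (w : W) (l m n : int), exists K : nat, forall K' : nat,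
    (K <= K')%N ->
    \sum_(i < K') (binz m i)%:~R *: YW (m + n - (i : nat)%:Z) (Y (l + (i : nat)%:Z) u v) w
    = \sum_(i < K') ((-1) ^+ (i : nat) * (binz l i)%:~R) *:
        (YW (l + m - (i : nat)%:Z) u (YW (n + (i : nat)%:Z) v w)
         - msign F l *: YW (l + n - (i : nat)%:Z) v (YW (m + (i : nat)%:Z) u w)).

Definition is_va_module (V W : lmodType F) (vac : V) (Y : int -> V -> V -> V)
    (YW : int -> V -> W -> W) : Prop :=
  [/\ (forall n u, is_lin (YW n u)),
      (forall n w, is_lin (fun u => YW n u w)),
      (forall u w, exists N : int, forall n, N <= n -> YW n u w = 0),
      (forall n w, YW n vac w = if n == -1 then w else 0) &
      borcherds Y YW].

Definition is_vertex_algebra (V : lmodType F) (vac : V) (Y : int -> V -> V -> V)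
  : Prop :=
  [/\ is_va_module vac Y Y,
      (forall n u, 0 <= n -> Y n u vac = 0) &
      (forall u, Y (-1) u vac = u)].

(* Z-graded weight H-module: operators Lm1 n = L_{-1}^{(n)}, L0 n = L_0^{(n)},
   L1 n = L_1^{(n)}, subject to the defining relations of the hyperalgebra
   H = F (x) U(sl_2)_Z (divided powers, Kostant's commutation formula) on a
   weight module. *)
Definition is_weight_Hmodule (W : lmodType F) (G : int -> W -> Prop)
    (Lm1 L0 L1 : nat -> W -> W) : Prop :=
  is_grading G /\
  [/\ (forall n, is_lin (Lm1 n) /\ is_lin (L0 n) /\ is_lin (L1 n)),
      (forall w, Lm1 0%N w = w /\ L1 0%N w = w),
      (forall a b w, Lm1 a (Lm1 b w) = ('C(a + b, b))%:R *: Lm1 (a + b)%N w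
                  /\ L1 a (L1 b w) = ('C(a + b, b))%:R *: L1 (a + b)%N w),
      (forall (n : int) (r : nat) w, G n w ->
          [/\ G (n + r%:Z) (Lm1 r w), G (n - r%:Z) (L1 r w) &
              L0 r w = (binz (-2 * n) r)%:~R *: w]) &
      (forall (n : int) (a b : nat) w, G n w ->
          L1 a (Lm1 b w) =
          \sum_(t < (minn a b).+1)
             ((-1) ^+ (t : nat) * (binz (-2 * n + a%:Z - b%:Z) t)%:~R) *:
               Lm1 (b - t)%N (L1 (a - t)%N w))].

(* Coefficientwise form of
   e^{zL1} Y(v,z0) e^{-zL1} = Y(e^{z(1-zz0)L1}(1-zz0)^{-2deg} v, z0/(1-zz0))
   for homogeneous v of degree d: the coefficient of z^k z0^{-r-1} applied to w. *)
Definition mobius_cond (V W : lmodType F) (GV : int -> V -> Prop)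
    (YW : int -> V -> W -> W) (L1V : nat -> V -> V) (L1W : nat -> W -> W) : Prop :=
  forall (d : int) (v : V) (w : W) (k : nat) (r : int), GV d v ->
    \sum_(a < k.+1) (-1) ^+ (k - a)%N *: L1W a (YW r v (L1W (k - a)%N w))
    = \sum_(i < k.+1)
        ((-1) ^+ (i : nat) * (binz ((k - i)%N%:Z - 2 * d + r + (i : nat)%:Z + 1) i)%:~R)
          *: YW (r + (i : nat)%:Z) (L1V (k - i)%N v) w.

(* e^{zL_{-1}} Y_W(v,x) e^{-zL_{-1}} = Y_W(e^{zL_{-1}} v, x), coefficientwise. *)
Definition lm1_cond (V W : lmodType F) (YW : int -> V -> W -> W)
    (Lm1V : nat -> V -> V) (Lm1W : nat -> W -> W) : Prop :=
  forall (v : V) (w : W) (k : nat) (r : int),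
    \sum_(a < k.+1) (-1) ^+ (k - a)%N *: Lm1W a (YW r v (Lm1W (k - a)%N w))
    = YW r (Lm1V k v) w.

Definition is_H_module_VA (V : lmodType F) (GV : int -> V -> Prop) (vac : V)
    (Y : int -> V -> V -> V) (Lm1 L0 L1 : nat -> V -> V) : Prop :=
  is_vertex_algebra vac Y /\ is_weight_Hmodule GV Lm1 L0 L1 /\
  [/\ GV 0 vac /\ (forall (m n r : int) u v, GV m u -> GV n v ->
                     GV (m + n - r - 1) (Y r u v)),
      (forall (n : nat) v, Lm1 n v = Y (- n%:Z - 1) v vac),
      (exists N : int, forall n v, n < N -> GV n v -> v = 0),
      (forall n : nat, L1 n vac = if n == 0%N then vac else 0) &
      mobius_cond GV Y L1 L1].

Definition is_VH_module (V W : lmodType F) (GV : int -> V -> Prop) (vac : V)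
    (Y : int -> V -> V -> V) (Lm1V L1V : nat -> V -> V)
    (GW : int -> W -> Prop) (YW : int -> V -> W -> W)
    (Lm1W L0W L1W : nat -> W -> W) : Prop :=
  [/\ is_weight_Hmodule GW Lm1W L0W L1W,
      is_va_module vac Y YW,
      (forall (k n m : int) v w, GV k v -> GW n w -> GW (k + n - m - 1) (YW m v w)),
      lm1_cond YW Lm1V Lm1W &
      mobius_cond GV YW L1V L1W].

Definition is_VH_hom (V W : lmodType F) (Y : int -> V -> V -> V)
    (Lm1V L0V L1V : nat -> V -> V) (YW : int -> V -> W -> W)
    (Lm1W L0W L1W : nat -> W -> W) (f : V -> W) : Prop :=
  [/\ is_lin f,
      (forall n u v, f (Y n u v) = YW n u (f v)) &
      (forall (n : nat) v, [/\ f (Lm1V n v) = Lm1W n (f v),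
                               f (L0V n v) = L0W n (f v) &
                               f (L1V n v) = L1W n (f v)])].

End Defs.

(* Main.v *)
Require Import Defs.
From HB Require Import structures.
From mathcomp Require Import all_boot all_order all_algebra.
Import Order.TTheory GRing.Theory Num.Theory.
Local Open Scope ring_scope.

Section Helpers.
Variable F : fieldType.

Lemma lin0 (U W : lmodType F) (f : U -> W) : is_lin f -> f 0 = 0.
Proof.
move=> fl; have := fl (-1) 0 0.
by rewrite scaler0 addr0 scaleN1r addNr.
Qed.

Lemma linD (U W : lmodType F) (f : U -> W) : is_lin f -> forall x y, f (x + y) = f x + f y.
Proof. by move=> fl x y; rewrite -[x in LHS]scale1r fl scale1r. Qed.

Lemma lin_sum (U W : lmodType F) (f : U -> W) (I : Type) (s : seq I) (g : I -> U) :
  is_lin f -> f (\sum_(x <- s) g x) = \sum_(x <- s) f (g x).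
Proof.
move=> fl; elim: s => [|a s IH]; first by rewrite !big_nil lin0.
by rewrite !big_cons linD // IH.
Qed.

Variable V : lmodType F.
Variable G : int -> V -> Prop.
Hypothesis HG : is_grading G.

Lemma grZ n a x : G n x -> G n (a *: x).
Proof.
case: HG => G0 Gl _ _ Gx; rewrite -[a *: x]addr0; exact: Gl.
Qed.

Lemma grD n x y : G n x -> G n y -> G n (x + y).
Proof.
case: HG => G0 Gl _ _ Gx Gy; rewrite -[x]scale1r; exact: Gl.
Qed.

Lemma gr_sum n (I : eqType) (s : seq I) (g : I -> V) :
  (forall i, i \in s -> G n (g i)) -> G n (\sum_(i <- s) g i).
Proof.
case: (HG) => G0 _ _ _.
elim: s => [|a s IH] H; first by rewrite big_nil.
rewrite big_cons; apply: grD; first by apply: H; rewrite inE eqxx.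
by apply: IH => i Hi; apply: H; rewrite inE Hi orbT.
Qed.

Lemma uniq_decomp (s : seq (int * V)) :
  (forall x, x \in s -> G x.1 x.2) ->
  exists s' : seq (int * V), [/\ uniq (map fst s'), (forall x, x \in s' -> G x.1 x.2)
      & \sum_(x <- s) x.2 = \sum_(x <- s') x.2].
Proof.
elim: s => [|x s IH] Hs.
  by exists [::]; split => //; rewrite !big_nil.
have [|s0 [u0 g0 e0]] := IH.
  by move=> y ys; apply: Hs; rewrite inE ys orbT.
have Gx : G x.1 x.2 by apply: Hs; rewrite inE eqxx.
case: (boolP (x.1 \in map fst s0)) => xin.
- exists (map (fun y => if y.1 == x.1 then (y.1, x.2 + y.2) else y) s0).
  have em : map fst (map (fun y => if y.1 == x.1 then (y.1, x.2 + y.2) else y) s0)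
            = map fst s0.
    by rewrite -map_comp; apply: eq_map => y /=; case: ifP.
  split.
  + by rewrite em.
  + move=> z /mapP [y ys ->]; case: ifP => [/eqP e|_] /=; last exact: g0.
    by apply: grD; [rewrite e | apply: g0].
  + rewrite big_cons e0 big_map.
    rewrite [RHS](eq_bigr (fun y : int * V => (if y.1 == x.1 then x.2 else 0) + y.2)); last first.
      by move=> y _; case: ifP => //= _; rewrite add0r.
    rewrite big_split /= -big_mkcond big_const_seq iter_addr_0.
    have -> : count (fun y : int * V => y.1 == x.1) s0 = 1%N.
      by rewrite -[RHS]/(nat_of_bool true) -xin -(count_uniq_mem x.1 u0) count_map; apply: eq_count => y /=.
    by [].
- exists (x :: s0); split.
  + by rewrite /= xin.
  + by move=> z; rewrite inE => /orP [/eqP ->|]; [|apply: g0].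
  + by rewrite !big_cons e0.
Qed.

End Helpers.

Lemma coef_binom (R : comNzRingType) n i :
  ((1 + 'X : {poly R}) ^+ n)`_i = ('C(n, i))%:R.
Proof.
rewrite exprDn coef_sum.
under eq_bigr => j _ do rewrite expr1n mul1r coefMn coefXn.
case: (ltnP i n.+1) => hi.
  rewrite (bigD1 (Ordinal hi)) //= eqxx big1 ?addr0 //.
  move=> j /negbTE ne; suff -> : (i == j) = false by rewrite mul0rn.
  by apply/negbTE; apply: contraFN ne => /eqP e; apply/eqP/val_inj.
rewrite big1 ?bin_small //; move=> j _.
suff -> : (i == j) = false by rewrite mul0rn.
by apply/negbTE; rewrite neq_ltn (leq_trans (ltn_ord j) hi) orbT.
Qed.

Lemma binq (F : fieldType) p (charF : p \in [pchar F]) e m :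
  (m < p ^ e)%N -> ('C(m + p ^ e, p ^ e))%:R = 1 :> F.
Proof.
move=> hm; have pp := pcharf_prime charF.
have := coef_binom F (m + p ^ e) (p ^ e).
rewrite exprD [(1 + 'X) ^+ (p ^ e)]exprDn_pchar; last first.
  by rewrite (eq_pnat _ (pchar_poly F)) (eq_pnat _ (pcharf_eq charF)) pnatX pnat_id.
rewrite expr1n mulrDr mulr1 coefD coefMXn ltnn subnn !coef_binom bin_small // bin0 add0r.
move=> h; symmetry; exact: h.
Qed.

Lemma binz_nz (F : fieldType) p (charF : p \in [pchar F]) (k : int) :
  k != 0 -> exists r : nat, (0 < r)%N /\ ((binz (-2 * k) r)%:~R != 0 :> F).
Proof.
move=> k0; have pp := pcharf_prime charF.
case E: (-2 * k) => [n|n].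
- exists n; split.
    rewrite lt0n; apply/eqP => n0; move: E; rewrite n0 => /eqP.
    by rewrite mulf_eq0 (negbTE k0) orbF.
  rewrite /= binn -pmulrn; exact: oner_neq0.
- exists (p ^ n)%N; split; first by rewrite expn_gt0 prime_gt0.
  rewrite /= intrM intr_sign -pmulrn.
  rewrite (binq _ _ charF); first by rewrite mulr1 signr_eq0.
  by apply: ltn_expl; exact: prime_gt1.
Qed.

Arguments grZ [F V G] HG [n a x].
Arguments gr_sum [F V G] HG [n I s g].
Arguments uniq_decomp [F V G] HG [s].
Arguments binz_nz [F p] charF [k].
Arguments lin_sum [F U W f I s g].
Arguments lin0 [F U W f].

Theorem lemma3p13 (F : closedFieldType) (p : nat) (p_prime : prime p)
    (p_odd : odd p) (charF : p \in [pchar F])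
    (V : lmodType F) (GV : int -> V -> Prop) (vac : V) (Y : int -> V -> V -> V)
    (Lm1V L0V L1V : nat -> V -> V)
    (HV : is_H_module_VA GV vac Y Lm1V L0V L1V)
    (W : lmodType F) (GW : int -> W -> Prop) (YW : int -> V -> W -> W)
    (Lm1W L0W L1W : nat -> W -> W)
    (HW : is_VH_module GV vac Y Lm1V L1V GW YW Lm1W L0W L1W)
    (f : V -> W) (Hf : is_VH_hom Y Lm1V L0V L1V YW Lm1W L0W L1W f) :
  forall (n : int) (v : V), GV n v -> GW n (f v).
Proof.
case: HV => [[_ _ Ycre1] [[GVgr [_ _ _ LGV _]] [[GV0 _] _ _ _ _]]].
case: HW => [[GWgr [LinW _ _ LGW _]] _ GWY _ _].
case: Hf => [flin fY fL].
have fv : forall v, f v = YW (-1) v (f vac) by move=> v; rewrite -fY Ycre1.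
suff Gw : GW 0 (f vac).
  move=> n v Gv; rewrite fv; have := GWY n 0 (-1) v (f vac) Gv Gw.
  by rewrite addr0 opprK addrK.
set w := f vac.
case: (GWgr) => GW0 _ Gdec Guniq.
have [s0 [Gs0 ws0]] := Gdec w.
have [s [us Gs es]] := uniq_decomp GWgr Gs0.
rewrite es in ws0.
have z : forall x, x \in s -> x.1 != 0 -> x.2 = 0.
  move=> x xs x0.
  have [r [r0 nz]] := binz_nz charF x0.
  pose c := fun y : int * W => ((binz (-2 * y.1) r)%:~R : F).
  have sum0 : \sum_(y <- s) c y *: y.2 = 0.
    case: (fL r vac) => _ fL0 _.
    have [_ _ L0vac] := LGV 0 r vac GV0.
    have b0 : binz (-2 * 0) r = 0 by rewrite mulr0 /= bin0n; case: (r) r0.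
    rewrite b0 scale0r in L0vac.
    rewrite -/w L0vac lin0 // ws0 (lin_sum (proj1 (proj2 (LinW r)))) in fL0.
    rewrite [RHS]fL0; apply: eq_big_seq => y ys.
    by have [_ _ ->] := LGW y.1 r y.2 (Gs y ys).
  have u1 : uniq (map fst (map (fun y => (y.1, c y *: y.2)) s)) by rewrite -map_comp.
  have g1 : forall y, y \in map (fun y => (y.1, c y *: y.2)) s -> GW y.1 y.2.
    move=> y /mapP [y' y's ->] /=; apply: (grZ GWgr); exact: Gs.
  have s1 : \sum_(y <- map (fun y => (y.1, c y *: y.2)) s) y.2 = 0 by rewrite big_map.
  have /= /eqP := Guniq _ u1 g1 s1 (x.1, c x *: x.2) (map_f _ xs).
  by rewrite scaler_eq0 (negbTE nz) /= => /eqP.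
rewrite ws0; apply: (gr_sum GWgr) => y ys.
case: (eqVneq y.1 0) => [e|ne]; first by rewrite -e; exact: Gs.
by rewrite (z y ys ne).
Qed.
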